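(* Let $\hat W^{\rm opt}$ be the optimal value of (P1) and let $\hat W=\max\{\hat W^{\rm narrow},\hat W^{\rm opt,wide}\}$, i.e. the value obtained by Algorithm I when Algorithm IIb is replaced by an exact (exhaustive) optimization of (P1) restricted to pairs in $\mathcal M^{\rm wide}$. Then $\hat W\ge\hat W^{\rm opt}/(1+T+\Delta+2J)$ if $\mathcal M^{\rm wide}=\emptyset$, and $\hat W\ge\hat W^{\rm opt}/(2+T+\Delta+2J)$ otherwise.
   Context: Setup. Users $\{1,\dots,K\}$ partitioned into groups $\mathcal G_1,\dots,\mathcal G_L$; $N$ RBs; a chunk is a vector $c\in\{0,1\}^N$ whose ones form a nonempty contiguous block, ${\rm Tail}(c)$ its last index; $\mathcal U$ the family of nonempty $U\subseteq\{1,\dots,K\}$ with $|U|\le T$ and $|U\cap\mathcal G_s|\le1$ for all $s$; pairs are elements of $\mathcal M=\mathcal U\times\mathcal C$. Metrics $p(U,c)\ge0$; weights $\beta^q(U,c)\in[0,1]$ ($q=1,\dots,J$); binary weights $\alpha^q(U,c)\in\{0,1\}$ ($q\in\mathcal I$, finite) with $\sum_{q\in\mathcal I}\alpha^q(U,c)\le\Delta$ per pair. A set $F$ of pairs is feasible if each group meets $U$ for at most one $(U,c)\in F$, each RB lies in $c$ for at most one $(U,c)\in F$, $\sum_F\beta^q\le1$ ($q\le J$), $\sum_F\alpha^q\le1$ ($q\in\mathcal I$); (P1) maximizes $\sum_F p$ over feasible $F$. Pairs conflict if some group meets both user sets, or the chunks share an RB, or some $q\in\mathcal I$ has both $\alpha^q$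 equal to 1. $\mathcal M^{\rm narrow}=\{(U,c):\beta^q(U,c)\le1/2\ \forall q\}$, $\mathcal M^{\rm wide}=\mathcal M\setminus\mathcal M^{\rm narrow}$; $\hat W^{\rm opt,wide}$ is the optimum of (P1) restricted to pairs in $\mathcal M^{\rm wide}$ (0 if empty); $\max_{q\le J}\beta^q:=0$ if $J=0$. $\hat W^{\rm narrow}$ is the value of the output of Algorithm IIa: set $p'=p$ on $\mathcal M^{\rm narrow}$, empty stack $S$; for $j=1,\dots,N$, let $(U^*,c^* )$ maximize $p'$ over pairs of $\mathcal M^{\rm narrow}$ with ${\rm Tail}(c)=j$; if $\hat p=p'(U^*,c^* )>0$, push it on $S$ and for each $(U,c)\in\mathcal M^{\rm narrow}$ with $p'(U,c)>0$ subtract $\hat p$ if it conflicts with $(U^*,c^* )$, else subtract $2\hat p\max_q\beta^q(U,c)$. Then pop $S$ from the top, adding each popped pair to an initially empty $S'$ if $S'$ plus it is feasible; $\hat W^{\rm narrow}=\sum_{S'}p$. *)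

(* Defs.v *)
From HB Require Import structures.
From mathcomp Require Import all_boot all_order all_algebra.
Set Implicit Arguments. Unset Strict Implicit. Unset Printing Implicit Defensive.
Import Order.TTheory GRing.Theory Num.Theory.
Local Open Scope ring_scope.

(* Users are 'I_K, RBs are 'I_N (indices 0..N-1), groups are 'I_L and the
   partition of users into groups is given by grp : 'I_K -> 'I_L.
   A pair (U,c) is an element of {set 'I_K} * {set 'I_N}; only "valid" pairs
   (U in the family 𝒰, c a chunk) belong to M. *)
Definition pairT (K N : nat) := ({set 'I_K} * {set 'I_N})%type.

Section Model.
Context (K N L T J Delta : nat) (Idx : finType) (R : realFieldType)
        (grp : 'I_K -> 'I_L)
        (p : pairT K N -> R)
        (beta : 'I_J -> pairT K N -> R)
        (alpha : Idx -> pairT K N -> bool).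

Definition meets (s : 'I_L) (U : {set 'I_K}) : bool := [exists u in U, grp u == s].

Definition is_chunk (c : {set 'I_N}) : bool :=
  (c != set0) &&
  [forall i : 'I_N, forall j : 'I_N, forall k : 'I_N,
     ((i <= j)%N && (j <= k)%N && (i \in c) && (k \in c)) ==> (j \in c)].

Definition tail (c : {set 'I_N}) : nat := \max_(i in c) (i : nat).

Definition in_U (U : {set 'I_K}) : bool :=
  (U != set0) && (#|U| <= T)%N &&
  [forall s : 'I_L, (#|[set u in U | grp u == s]| <= 1)%N].

Definition valid (x : pairT K N) : bool := in_U x.1 && is_chunk x.2.

Definition feasible (F : {set pairT K N}) : bool :=
  [&& [forall x in F, valid x],
      [forall s : 'I_L, (#|[set x in F | meets s x.1]| <= 1)%N],
      [forall i : 'I_N, (#|[set x in F | i \in x.2]| <= 1)%N],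
      [forall q : 'I_J, \sum_(x in F) beta q x <= 1] &
      [forall q : Idx, (\sum_(x in F) (alpha q x : nat) <= 1)%N]].

Definition value (F : {set pairT K N}) : R := \sum_(x in F) p x.

Definition Wopt : R :=
  \big[Num.max/0]_(F : {set pairT K N} | feasible F) value F.

Definition conflict (x y : pairT K N) : bool :=
  [exists s : 'I_L, meets s x.1 && meets s y.1] ||
  (x.2 :&: y.2 != set0) ||
  [exists q : Idx, alpha q x && alpha q y].

(* max_q beta^q (0 if J = 0; beta >= 0) *)
Definition maxbeta (x : pairT K N) : R := \big[Num.max/0]_(q < J) beta q x.

Definition narrow (x : pairT K N) : bool :=
  valid x && [forall q : 'I_J, beta q x <= 2^-1].

Definition wide (x : pairT K N) : bool := valid x && ~~ narrow x.

(* W^{opt,wide} : optimum of (P1) restricted to pairs in M^wide (0 if empty) *)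
Definition Wopt_wide : R :=
  \big[Num.max/0]_(F : {set pairT K N} |
       feasible F && [forall x in F, wide x]) value F.

(* state: current p' (meaningful on M^narrow) and the stack (top = head) *)
Definition stateT := ((pairT K N -> R) * seq (pairT K N))%type.

Definition init_state : stateT := (p, [::]).

Definition update (p' : pairT K N -> R) (xs : pairT K N) : pairT K N -> R :=
  let ph := p' xs in
  fun x => if narrow x && (0 < p' x) then
             p' x - (if conflict x xs then ph else 2 * ph * maxbeta x)
           else p' x.

(* iteration j (RB j, 0-based): xs is a maximizer of p' over narrow pairs with
   tail j (any tie-breaking); if its value is positive it is pushed. *)
Definition step (j : nat) (st st' : stateT) : Prop :=
  ((forall x, narrow x -> tail x.2 = j -> st.1 x <= 0) /\ st' = st) \/
  (exists xs, [/\ narrow xs, tail xs.2 = j,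
                 (forall x, narrow x -> tail x.2 = j -> st.1 x <= st.1 xs),
                 0 < st.1 xs &
                 st' = (update st.1 xs, xs :: st.2)]).

Fixpoint reach (j : nat) (st : stateT) : Prop :=
  match j with
  | 0 => st = init_state
  | j'.+1 => exists st0, reach j' st0 /\ step j' st0 st
  end.

Definition pop_phase (S : seq (pairT K N)) : {set pairT K N} :=
  foldl (fun acc x => if feasible (x |: acc) then x |: acc else acc)
        set0 S.

Definition Wnarrow (st : stateT) : R := value (pop_phase st.2).

End Model.

(* Main.v *)
Require Import Defs.
From HB Require Import structures.
From mathcomp Require Import all_boot all_order all_algebra.
From mathcomp Require Import lra.
Set Implicit Arguments. Unset Strict Implicit. Unset Printing Implicit Defensive.
Import Order.TTheory GRing.Theory Num.Theory.
Local Open Scope ring_scope.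

Section Proof.
Context (K N L T J Delta : nat) (Idx : finType) (R : realFieldType)
        (grp : 'I_K -> 'I_L)
        (p : pairT K N -> R)
        (beta : 'I_J -> pairT K N -> R)
        (alpha : Idx -> pairT K N -> bool).

Local Notation valid := (@Defs.valid K N L T grp).
Local Notation narrow := (@Defs.narrow K N L T J R grp beta).
Local Notation feasible := (@Defs.feasible K N L T J Idx R grp beta alpha).
Local Notation conflict := (@Defs.conflict K N L Idx grp alpha).
Local Notation maxbeta := (@Defs.maxbeta K N J R beta).
Local Notation update := (@Defs.update K N L T J Idx R grp beta alpha).
Local Notation value := (@Defs.value K N R p).

Hypothesis hp : forall x, valid x -> 0 <= p x.
Hypothesis hbeta : forall q x, valid x -> 0 <= beta q x <= 1.
Hypothesis halpha : forall x, valid x -> (\sum_(q : Idx) (alpha q x : nat) <= Delta)%N.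

Lemma narrow_valid x : narrow x -> valid x.
Proof. by case/andP. Qed.

Lemma chunk_nonempty x : valid x -> x.2 != set0.
Proof. by case/andP=> _ /andP[]. Qed.

Lemma tail_in (c : {set 'I_N}) : c != set0 -> exists2 t : 'I_N, t \in c & tail c = t.
Proof.
move=> /set0Pn [i0 Hi0].
have h0 : (0 < #|mem c|)%N by apply/card_gt0P; exists i0.
have [t Ht E] := @eq_bigmax_cond _ (mem c) (fun i : 'I_N => (i:nat)) h0.
by exists t; last exact: E.
Qed.

Lemma le_tail (c : {set 'I_N}) (i : 'I_N) : i \in c -> (i <= tail c)%N.
Proof. by move=> Hi; apply: (@leq_bigmax_cond _ (mem c) (fun i : 'I_N => (i:nat)) i Hi). Qed.

Lemma tail_lt x : valid x -> (tail x.2 < N)%N.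
Proof.
move=> /chunk_nonempty /tail_in [t _ ->]; exact: ltn_ord.
Qed.

Lemma maxbeta_ge0 x : 0 <= maxbeta x.
Proof. exact: bigmax_ge_id. Qed.

Lemma beta_le_maxbeta q x : beta q x <= maxbeta x.
Proof. exact: le_bigmax. Qed.

Lemma maxbeta_le_sum x : valid x -> maxbeta x <= \sum_(q < J) beta q x.
Proof.
move=> Vx; apply: bigmax_le; first by apply: sumr_ge0 => q _; case/andP: (hbeta q Vx).
move=> q _; rewrite (bigD1 q) //= lerDl; apply: sumr_ge0 => i _; by case/andP: (hbeta i Vx).
Qed.

Lemma conflict_self x : valid x -> conflict x x.
Proof. move=> Vx; rewrite /conflict setIid (chunk_nonempty Vx); by rewrite orbT. Qed.


Lemma sumR_sub (G F : {set pairT K N}) (f : pairT K N -> R) :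
  G \subset F -> (forall x, x \in F -> 0 <= f x) ->
  \sum_(x in G) f x <= \sum_(x in F) f x.
Proof.
move=> sGF f0; rewrite [X in _ <= X](big_setID G) /= (setIidPr sGF) lerDl.
by apply: sumr_ge0 => x; rewrite inE => /andP[_ /f0].
Qed.

Lemma sumN_sub (G F : {set pairT K N}) (f : pairT K N -> nat) :
  G \subset F -> (\sum_(x in G) f x <= \sum_(x in F) f x)%N.
Proof.
move=> sGF; rewrite [X in (_ <= X)%N](big_setID G) /= (setIidPr sGF).
exact: leq_addr.
Qed.

Lemma feasible_sub (G F : {set pairT K N}) : G \subset F -> feasible F -> feasible G.
Proof.
move=> sGF /and5P[/forall_inP hv /forallP hg /forallP hr /forallP hb /forallP ha].
have vF x : x \in F -> valid x by move/hv.
apply/and5P; split.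
- by apply/forall_inP => x /(subsetP sGF) /hv.
- apply/forallP => s; apply: leq_trans (hg s); apply: subset_leq_card.
  by apply/subsetP => x; rewrite !inE => /andP[/(subsetP sGF) -> ->].
- apply/forallP => i; apply: leq_trans (hr i); apply: subset_leq_card.
  by apply/subsetP => x; rewrite !inE => /andP[/(subsetP sGF) -> ->].
- apply/forallP => q; apply: le_trans (hb q); apply: sumR_sub => // x /vF Vx.
  by case/andP: (hbeta q Vx).
- apply/forallP => q; apply: leq_trans (ha q); exact: sumN_sub.
Qed.

Lemma update_le p0 xs x : 0 <= p0 xs -> update p0 xs x <= p0 x.
Proof.
move=> h; rewrite /update; case: ifP => // _.
rewrite lerBlDr lerDl; case: ifP => // _.
by rewrite mulr_ge0 ?maxbeta_ge0 // mulr_ge0.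
Qed.

Lemma update_self p0 xs : narrow xs -> 0 < p0 xs -> update p0 xs xs = 0.
Proof.
move=> nx h; rewrite /update nx h /= conflict_self ?subrr //; exact: narrow_valid.
Qed.


Lemma half_half : (2^-1 + 2^-1 : R) = 1.
Proof. lra. Qed.

Lemma card_add1 (A : {set pairT K N}) xs (P : pred (pairT K N)) :
  xs \notin A -> (#|[set x in A | P x]| <= 1)%N ->
  (P xs -> forall y, y \in A -> ~~ P y) ->
  (#|[set x in xs |: A | P x]| <= 1)%N.
Proof.
move=> nA h hP; case Pxs: (P xs).
- have -> : [set x in xs |: A | P x] = [set xs].
    apply/setP => x; rewrite !inE; case: eqP => [-> //|_ /=].
    by apply/negbTE; apply/negP => /andP[xA Px]; move: (hP Pxs x xA); rewrite Px.
  by rewrite cards1.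
- have -> : [set x in xs |: A | P x] = [set x in A | P x].
    apply/setP => x; rewrite !inE; case: eqP => [->|_ //=].
    by rewrite Pxs !andbF.
  exact: h.
Qed.

Lemma feasible_add (A : {set pairT K N}) xs :
  feasible A -> narrow xs -> xs \notin A ->
  (forall y, y \in A -> ~~ conflict y xs) ->
  (forall q, \sum_(y in A) beta q y <= 2^-1) ->
  feasible (xs |: A).
Proof.
move=> /and5P[/forall_inP hv /forallP hg /forallP hr /forallP hb /forallP ha] nx nA nc hB.
apply/and5P; split.
- apply/forall_inP => x; rewrite !inE => /orP[/eqP->|/hv//]; exact: narrow_valid.
- apply/forallP => s; apply: card_add1 => // Ps y yA; apply/negP => Py.
  move/negP: (nc y yA); apply; rewrite /conflict; apply/orP; left; apply/orP; left.
  by apply/existsP; exists s; rewrite Py Ps.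
- apply/forallP => i; apply: card_add1 => // Ps y yA; apply/negP => Py.
  move/negP: (nc y yA); apply; rewrite /conflict; apply/orP; left; apply/orP; right.
  by apply/set0Pn; exists i; rewrite inE Py Ps.
- apply/forallP => q; rewrite big_setU1 //= -half_half; apply: lerD => //.
  by case/andP: nx => _ /forallP.
- apply/forallP => q; rewrite big_setU1 //=; case aq: (alpha q xs) => /=.
  + rewrite big1 // => y yA; apply/eqP; rewrite eqb0; apply/negP => ay.
    move/negP: (nc y yA); apply; rewrite /conflict; apply/orP; right.
    by apply/existsP; exists q; rewrite ay aq.
  + exact: ha.
Qed.


Lemma diff_update p0 xs y : narrow y -> 0 < p0 y ->
  p0 y - update p0 xs y = if conflict y xs then p0 xs else 2 * p0 xs * maxbeta y.
Proof. by move=> ny h; rewrite /update ny h /= opprB addrC subrK. Qed.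

Lemma diff_update_ge0 p0 xs y : 0 <= p0 xs -> 0 <= p0 y - update p0 xs y.
Proof. by move=> h; rewrite subr_ge0 update_le. Qed.

Lemma pop_step p0 xs (A : {set pairT K N}) :
  narrow xs -> 0 < p0 xs -> feasible A ->
  (forall y, y \in A -> narrow y && (0 < update p0 xs y)) ->
  p0 xs + \sum_(y in A) update p0 xs y <=
  \sum_(y in (if feasible (xs |: A) then xs |: A else A)) p0 y.
Proof.
move=> nx px fA hA.
set p1 := update p0 xs.
have le y : p1 y <= p0 y by apply: update_le; exact: ltW.
have nA : xs \notin A.
  apply/negP => /hA /andP[_]; by rewrite /p1 update_self // ltxx.
have pos y : y \in A -> 0 < p0 y.
  by move=> /hA /andP[_ h]; exact: lt_le_trans h (le y).
have nyA y : y \in A -> narrow y by move=> /hA /andP[].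
case: ifP => hf.
  by rewrite big_setU1 //=; apply: lerD => //; apply: ler_sum => y _.
suff key : p0 xs <= \sum_(y in A) (p0 y - p1 y).
  by rewrite sumrB in key; lra.
case: (boolP [exists y in A, conflict y xs]).
  case/exists_inP => y yA cy.
  rewrite (bigD1 y) //= diff_update ?nyA ?pos // cy lerDl.
  by apply: sumr_ge0 => z /andP[_ _]; apply: diff_update_ge0; exact: ltW.
move=> nc.
have nc' y : y \in A -> ~~ conflict y xs.
  by move=> yA; apply/negP => cy; move/negP: nc; apply; apply/exists_inP; exists y.
have : ~~ [forall q, \sum_(y in A) beta q y <= 2^-1].
  apply/negP => /forallP hq; move/negP: hf; apply; exact: feasible_add.
case/forallPn => q; rewrite -ltNge => hq.
have e : \sum_(y in A) (p0 y - p1 y) = \sum_(y in A) (2 * p0 xs * maxbeta y).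
  apply: eq_bigr => y yA; rewrite diff_update ?nyA ?pos //.
  by rewrite (negbTE (nc' y yA)).
rewrite e -mulr_sumr.
have : 2 * p0 xs * 2^-1 <= 2 * p0 xs * \sum_(y in A) maxbeta y.
  apply: ler_wpM2l; first by rewrite mulr_ge0 // ltW.
  apply: le_trans (ltW hq) _; apply: ler_sum => y _; exact: beta_le_maxbeta.
apply: le_trans; lra.
Qed.


Lemma exists_le_sum (I : finType) (P : pred I) : (([exists i, P i] : nat) <= \sum_i (P i : nat))%N.
Proof.
case: existsP => [[i Pi]|_] //=; by rewrite (bigD1 i) //= Pi.
Qed.

Lemma sum_bool_card (I : finType) (F : {set I}) (P : pred I) :
  \sum_(x in F) (P x : nat) = #|[set x in F | P x]|.
Proof.
rewrite -sum1_card big_mkcond [RHS]big_mkcond /=; apply: eq_bigr => x _.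
by rewrite inE; case: (x \in F); case: (P x).
Qed.

Lemma sum_bool_cardT (I : finType) (P : pred I) :
  \sum_x (P x : nat) = #|[set x | P x]|.
Proof.
rewrite -sum1dep_card [RHS]big_mkcond /=; apply: eq_bigr => x _.
by case: (P x).
Qed.

Lemma meets_card (U : {set 'I_K}) : (\sum_s (meets grp s U : nat) <= #|U|)%N.
Proof.
rewrite sum_bool_cardT; apply: leq_trans (leq_imset_card grp U).
apply: subset_leq_card; apply/subsetP => s; rewrite inE => /exists_inP [u uU /eqP <-].
by apply: imset_f.
Qed.


Lemma count_grp (F : {set pairT K N}) xs : feasible F -> valid xs ->
  (\sum_(x in F) ([exists s, meets grp s x.1 && meets grp s xs.1] : nat) <= T)%N.
Proof.
case/and5P => _ /forallP hg _ _ _ vx.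
apply: leq_trans (_ : \sum_(x in F) \sum_s (meets grp s x.1 && meets grp s xs.1 : nat) <= _)%N.
  by apply: leq_sum => x _; apply: exists_le_sum.
rewrite exchange_big /=.
apply: leq_trans (_ : \sum_s (meets grp s xs.1 : nat) <= _)%N.
  apply: leq_sum => s _; case: (meets grp s xs.1); last by rewrite big1 // => x _; rewrite andbF.
  under eq_bigr do rewrite andbT.
  by rewrite sum_bool_card; exact: hg.
apply: leq_trans (meets_card _) _.
by case/andP: vx => /andP[/andP[_ ->]].
Qed.

Lemma count_alpha (F : {set pairT K N}) xs : feasible F -> valid xs ->
  (\sum_(x in F) ([exists q, alpha q x && alpha q xs] : nat) <= Delta)%N.
Proof.
case/and5P => _ _ _ _ /forallP ha vx.
apply: leq_trans (_ : \sum_(x in F) \sum_q (alpha q x && alpha q xs : nat) <= _)%N.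
  by apply: leq_sum => x _; apply: exists_le_sum.
rewrite exchange_big /=.
apply: leq_trans (halpha vx); apply: leq_sum => q _.
case: (alpha q xs); last by rewrite big1 // => x _; rewrite andbF.
under eq_bigr do rewrite andbT.
exact: ha.
Qed.

Lemma count_rb (F : {set pairT K N}) (t : 'I_N) : feasible F ->
  (\sum_(x in F) (t \in x.2 : nat) <= 1)%N.
Proof.
case/and5P => _ _ /forallP hr _ _; rewrite sum_bool_card; exact: hr.
Qed.

Lemma count_beta (F : {set pairT K N}) : feasible F ->
  \sum_(x in F) \sum_(q < J) beta q x <= J%:R.
Proof.
case/and5P => _ _ _ /forallP hb _.
rewrite exchange_big /=.
apply: le_trans (_ : \sum_(q < J) (1 : R) <= _).
  by apply: ler_sum => q _; exact: hb.
by rewrite sumr_const card_ord.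
Qed.


Definition Bx (xs : pairT K N) (t : 'I_N) (x : pairT K N) : R :=
  ([exists s, meets grp s x.1 && meets grp s xs.1] : nat)%:R +
  (t \in x.2 : nat)%:R + ([exists q, alpha q x && alpha q xs] : nat)%:R +
  2 * \sum_(q < J) beta q x.

Lemma per_x p0 xs (t : 'I_N) x :
  narrow xs -> 0 < p0 xs -> tail xs.2 = t ->
  (forall z, narrow z -> (tail z.2 < tail xs.2)%N -> p0 z <= 0) ->
  narrow x ->
  p0 x - update p0 xs x <= p0 xs * Bx xs t x.
Proof.
move=> nxs pxs tt hprev nx.
have vx := narrow_valid nx.
have h4 : 0 <= \sum_(q < J) beta q x.
  by apply: sumr_ge0 => q _; case/andP: (hbeta q vx).
have h1 : 0 <= ([exists s, meets grp s x.1 && meets grp s xs.1] : nat)%:R :> R by rewrite ler0n.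
have h2 : 0 <= (t \in x.2 : nat)%:R :> R by rewrite ler0n.
have h3 : 0 <= ([exists q, alpha q x && alpha q xs] : nat)%:R :> R by rewrite ler0n.
have B0 : 0 <= Bx xs t x by rewrite /Bx; lra.
case: (boolP (0 < p0 x)) => hx; last first.
  by rewrite /update (negbTE hx) andbF subrr mulr_ge0 // ltW.
rewrite diff_update //; case: ifP => cf.
  rewrite -{1}[p0 xs]mulr1; apply: ler_wpM2l; first exact: ltW.
  move: cf; rewrite /conflict => /orP[/orP[g|c]|a].
  - by move: h2 h3; rewrite /Bx g /=; lra.
  - have tx : t \in x.2.
      case/set0Pn: c => i; rewrite inE => /andP[ix ixs].
      have le1 : (i <= t)%N by rewrite -tt; exact: le_tail.
      have le2 : (t <= tail x.2)%N.
        rewrite -tt leqNgt; apply/negP => lt; move: (hprev x nx lt); lra.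
      have [t' t'x et'] := tail_in (chunk_nonempty vx).
      case/andP: vx => _ /andP[_ /forallP /(_ i) /forallP /(_ t) /forallP /(_ t')].
      by rewrite le1 -et' le2 ix t'x /=.
    by move: h1 h3; rewrite /Bx tx /=; lra.
  - by move: h1 h2; rewrite /Bx a /=; lra.
rewrite mulrAC mulrC; apply: ler_wpM2l; first exact: ltW.
have := maxbeta_le_sum vx; rewrite /Bx; lra.
Qed.


Lemma opt_step p0 xs (F : {set pairT K N}) :
  narrow xs -> 0 < p0 xs ->
  (forall z, narrow z -> (tail z.2 < tail xs.2)%N -> p0 z <= 0) ->
  feasible F -> (forall x, x \in F -> narrow x) ->
  \sum_(x in F) (p0 x - update p0 xs x) <= (1 + T + Delta + 2 * J)%:R * p0 xs.
Proof.
move=> nxs pxs hprev fF nF.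
have vxs := narrow_valid nxs.
have [t txs tt] := tail_in (chunk_nonempty vxs).
apply: le_trans (_ : \sum_(x in F) p0 xs * Bx xs t x <= _).
  by apply: ler_sum => x xF; apply: per_x => //; exact: nF.
rewrite -mulr_sumr mulrC; apply: ler_wpM2r; first exact: ltW.
rewrite /Bx !big_split /= -!natr_sum -mulr_sumr.
have c1 : (\sum_(x in F) ([exists s, meets grp s x.1 && meets grp s xs.1] : nat))%:R <= T%:R :> R.
  by rewrite ler_nat; exact: count_grp.
have c2 : (\sum_(x in F) (t \in x.2 : nat))%:R <= 1%:R :> R.
  by rewrite ler_nat; exact: count_rb.
have c3 : (\sum_(x in F) ([exists q, alpha q x && alpha q xs] : nat))%:R <= Delta%:R :> R.
  by rewrite ler_nat; exact: count_alpha.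
have c4 := count_beta fF.
rewrite !natrD ?natrM; lra.
Qed.


Definition fpop (acc : {set pairT K N}) (x : pairT K N) :=
  if feasible (x |: acc) then x |: acc else acc.

Definition rho : R := (1 + T + Delta + 2 * J)%:R.

Definition Inv (j : nat) (st : stateT K N R) : Prop := exists Phi : R,
  [/\ (forall x, narrow x -> (tail x.2 < j)%N -> st.1 x <= 0),
      (forall A, feasible A -> (forall y, y \in A -> narrow y && (0 < st.1 y)) ->
         Phi + \sum_(y in A) st.1 y <= value (foldl fpop A st.2)) &
      (forall F, feasible F -> (forall x, x \in F -> narrow x) ->
         \sum_(x in F) (p x - st.1 x) <= rho * Phi)].

Lemma Inv_reach j st : @reach K N L T J Idx R grp p beta alpha j st -> Inv j st.
Proof.
elim: j st => [|j IH] st /=.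
  move=> ->; exists 0; split => //=.
  - by move=> A _ _; rewrite add0r.
  - by move=> F _ _; rewrite mulr0; under eq_bigr do rewrite subrr; rewrite big1.
case=> st0 [/IH [Phi [ha hb hc]]] [[hle ->]|[xs [nxs txs hmax pxs ->]]].
  exists Phi; split => // x nx; rewrite ltnS leq_eqVlt => /orP[/eqP e|]; last exact: ha.
  exact: hle.
set p0 := st0.1.
have p1le y : update p0 xs y <= p0 y by apply: update_le; exact: ltW.
exists (Phi + p0 xs); split => /=.
- move=> x nx; rewrite ltnS leq_eqVlt => /orP[/eqP e|lt].
    rewrite /update nx /=; case: ifP => hx; last by rewrite leNgt hx.
    have -> : conflict x xs.
      have [t tx et] := tail_in (chunk_nonempty (narrow_valid nx)).
      have [t' txs' et'] := tail_in (chunk_nonempty (narrow_valid nxs)).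
      have tt : t = t' by apply: val_inj; rewrite /= -et -et' e txs.
      rewrite /conflict; apply/orP; left; apply/orP; right.
      by apply/set0Pn; exists t; rewrite inE tx tt txs'.
    by rewrite subr_le0; apply: hmax.
  apply: le_trans (p1le x) _; exact: ha.
- move=> A fA hA.
  have fA' : feasible (fpop A xs) by rewrite /fpop; case: ifP.
  have hA' : forall y, y \in fpop A xs -> narrow y && (0 < p0 y).
    move=> y; rewrite /fpop; case: ifP => _; last first.
      by move=> /hA /andP[-> h]; apply: lt_le_trans h (p1le y).
    rewrite !inE => /orP[/eqP->|]; first by rewrite nxs pxs.
    by move=> /hA /andP[-> h]; apply: lt_le_trans h (p1le y).
  have := hb _ fA' hA'.
  have := pop_step nxs pxs fA hA.
  move=> h1 h2; apply: le_trans h2; rewrite -addrA lerD2l; exact: h1.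
- move=> F fF nF.
  have e : \sum_(x in F) (p x - update p0 xs x) =
           \sum_(x in F) (p x - p0 x) + \sum_(x in F) (p0 x - update p0 xs x).
    by rewrite -big_split /=; apply: eq_bigr => x _; rewrite addrA subrK.
  rewrite e mulrDr; apply: lerD; first exact: hc.
  rewrite /rho; apply: opt_step => //.
  by move=> z nz; rewrite txs; apply: ha.
Qed.


Lemma feasible0 : feasible set0.
Proof.
apply/and5P; split.
- by apply/forall_inP => x; rewrite inE.
- by apply/forallP => s; rewrite (_ : [set x in set0 | _] = set0) ?cards0 //; apply/setP => x; rewrite !inE.
- by apply/forallP => s; rewrite (_ : [set x in set0 | _] = set0) ?cards0 //; apply/setP => x; rewrite !inE.
- by apply/forallP => q; rewrite big_set0 ler01.
- by apply/forallP => q; rewrite big_set0.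
Qed.

Lemma rho_ge0 : 0 <= rho.
Proof. by rewrite /rho ler0n. Qed.

Lemma main_sec (st : stateT K N R) :
  @reach K N L T J Idx R grp p beta alpha N st ->
  let What := Num.max (Wnarrow T grp p beta alpha st)
                      (Wopt_wide T grp p beta alpha) in
  ((forall x, ~~ wide T grp beta x) ->
     Wopt T grp p beta alpha / (1 + T + Delta + 2 * J)%:R <= What) /\
  ((exists x, wide T grp beta x) ->
     Wopt T grp p beta alpha / (2 + T + Delta + 2 * J)%:R <= What).
Proof.
move=> /Inv_reach [Phi [ha hb hc]] What.
set Wn := Wnarrow T grp p beta alpha st.
set Ww := Wopt_wide T grp p beta alpha.
have PhiWn : Phi <= Wn.
  have h0 : forall y, y \in (set0 : {set pairT K N}) -> narrow y && (0 < st.1 y) by move=> y; rewrite inE.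
  have := hb set0 feasible0 h0.
  by rewrite big_set0 addr0.
have narrowF F : feasible F -> (forall x, x \in F -> narrow x) -> value F <= rho * Wn.
  move=> fF nF; apply: le_trans (_ : rho * Phi <= _); last by apply: ler_wpM2l; [exact: rho_ge0|].
  apply: le_trans (hc F fF nF); apply: ler_sum => x xF.
  have nx := nF x xF.
  have := ha x nx (tail_lt (narrow_valid nx)); lra.
have Ww0 : 0 <= Ww by apply: bigmax_ge_id.
have Wn_le : Wn <= What by rewrite /What le_max lexx.
have Ww_le : Ww <= What by rewrite /What le_max lexx orbT.
have What0 : 0 <= What by apply: le_trans Ww_le.
have split F : feasible F -> value F =
    value (F :&: [set x | narrow x]) + value (F :\: [set x | narrow x]).
  by move=> _; rewrite /value (big_setID [set x | narrow x]).
have fN F : feasible F -> feasible (F :&: [set x | narrow x]).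
  by apply: feasible_sub; exact: subsetIl.
have fW F : feasible F -> feasible (F :\: [set x | narrow x]).
  by apply: feasible_sub; exact: subsetDl.
have nN F : forall x, x \in F :&: [set x | narrow x] -> narrow x.
  by move=> x; rewrite !inE => /andP[].
have boundW F : feasible F -> value (F :\: [set x | narrow x]) <= Ww.
  move=> fF; rewrite /Ww /Wopt_wide.
  apply: (@le_bigmax_cond _ _ _ _ _ (fun G => feasible G && [forall x in G, wide T grp beta x]) (fun G => value G)).
  rewrite fW //=; apply/forall_inP => x; rewrite !inE => /andP[nx xF].
  case/and5P: fF => /forall_inP hv _ _ _ _.
  by rewrite /wide hv.
split.
- move=> nowide.
  have hpos : 0 < (1 + T + Delta + 2 * J)%:R :> R by rewrite ltr0n.
  rewrite ler_pdivrMr //.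
  apply: bigmax_le; first by rewrite mulr_ge0 // ltW.
  move=> F fF; rewrite split //.
  have -> : value (F :\: [set x | narrow x]) = 0.
    rewrite /value big1 // => x; rewrite !inE => /andP[nx xF].
    case/and5P: fF => /forall_inP hv _ _ _ _.
    by move: (nowide x); rewrite /wide hv // nx.
  rewrite addr0 mulrC; apply: le_trans (narrowF _ (fN _ fF) (nN F)) _.
  by apply: ler_wpM2l; [exact: rho_ge0|].
- move=> _.
  have hpos : 0 < (2 + T + Delta + 2 * J)%:R :> R by rewrite ltr0n.
  rewrite ler_pdivrMr //.
  apply: bigmax_le; first by rewrite mulr_ge0 // ltW.
  move=> F fF; rewrite split //.
  have e : (2 + T + Delta + 2 * J)%:R = rho + 1 :> R.
    by rewrite /rho !natrD; lra.
  rewrite e mulrDr mulr1 mulrC; apply: lerD; last by apply: le_trans Ww_le; exact: boundW.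
  apply: le_trans (narrowF _ (fN _ fF) (nN F)) _.
  by apply: ler_wpM2l; [exact: rho_ge0|].
Qed.

End Proof.

Theorem corollary1 (K N L T J Delta : nat) (Idx : finType) (R : realFieldType)
  (grp : 'I_K -> 'I_L) (p : pairT K N -> R)
  (beta : 'I_J -> pairT K N -> R) (alpha : Idx -> pairT K N -> bool)
  (hp : forall x, valid T grp x -> 0 <= p x)
  (hbeta : forall q x, valid T grp x -> 0 <= beta q x <= 1)
  (halpha : forall x, valid T grp x -> (\sum_(q : Idx) (alpha q x : nat) <= Delta)%N)
  (st : stateT K N R)
  (hrun : reach T grp p beta alpha N st) :
  let What := Num.max (Wnarrow T grp p beta alpha st)
                      (Wopt_wide T grp p beta alpha) in
  ((forall x, ~~ wide T grp beta x) ->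
     Wopt T grp p beta alpha / (1 + T + Delta + 2 * J)%:R <= What) /\
  ((exists x, wide T grp beta x) ->
     Wopt T grp p beta alpha / (2 + T + Delta + 2 * J)%:R <= What).
Proof.
exact: (main_sec hbeta halpha hrun).
Qed.
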